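(* Let $W$ be the Witt algebra with basis $\{x_n\mid n\in\mathbb{Z}\}$ and bracket $[x_m,x_n]=(n-m)x_{m+n}$. Let $(V_1,\cdot)$ and $(V_2,* )$ be left-symmetric algebra structures on the underlying space of $W$, each with commutator equal to the bracket of $W$, given by $x_m\cdot x_n=f_1(m,n)x_{m+n}$ and $x_m*x_n=f_2(m,n)x_{m+n}$. If $V_1$ and $V_2$ are isomorphic as left-symmetric algebras, then either $f_1(m,n)=f_2(m,n)$ for all $m,n$, or $f_1(m,n)=-f_2(-m,-n)$ for all $m,n$.
   Context: A left-symmetric algebra is a vector space with bilinear product satisfying $(xy)z-x(yz)=(yx)z-y(xz)$ for all $x,y,z$. *)

(* Defs.v *)
(* The Witt algebra's underlying
   space is the space of finitely supported functions Z -> C, i.e.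
   multinomials' {malg C[int]}, with basis x_n := << n >>. *)
From HB Require Import structures.
From mathcomp Require Import all_boot all_algebra.
From mathcomp Require Import Rstruct.
From mathcomp Require Import complex.
From mathcomp Require Import finmap monalg.

Set Implicit Arguments.
Unset Strict Implicit.
Unset Printing Implicit Defensive.

Import GRing.Theory Num.Theory.
Local Open Scope ring_scope.

Notation C := (complex Rdefinitions.R).

Notation W := {malg C[int]}.

Definition xb (n : int) : W := << n >>.

Definition lsa_mul (f : int -> int -> C) (a b : W) : W :=
  \sum_(m <- msupp a) \sum_(n <- msupp b)
     ((a@_m * b@_n * f m n) *: xb (m + n)).

Definition witt_bracket (a b : W) : W := lsa_mul (fun m n => (n - m)%:~R) a b.

Definition left_symmetric (f : int -> int -> C) : Prop :=
  forall a b c : W,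
    lsa_mul f (lsa_mul f a b) c - lsa_mul f a (lsa_mul f b c) =
    lsa_mul f (lsa_mul f b a) c - lsa_mul f b (lsa_mul f a c).

Definition commutator_is_witt (f : int -> int -> C) : Prop :=
  forall a b : W, lsa_mul f a b - lsa_mul f b a = witt_bracket a b.

Definition lsa_isomorphism (f1 f2 : int -> int -> C) (phi : W -> W) : Prop :=
  [/\ forall (c : C) (a b : W), phi (c *: a + b) = c *: phi a + phi b,
      bijective phi &
      forall a b : W, phi (lsa_mul f1 a b) = lsa_mul f2 (phi a) (phi b)].

(* Main.v *)
Require Import Defs.
From HB Require Import structures.
From mathcomp Require Import all_boot all_algebra.
From mathcomp Require Import Rstruct complex finmap monalg.
From mathcomp Require Import zify ring lra.
From mathcomp Require Import order.
Import Order.TTheory GRing.Theory Num.Theory.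
Local Open Scope ring_scope.

Lemma big_single (T : eqType) (s : seq T) (F : T -> C) m0 : uniq s ->
  (forall m, m \in s -> m != m0 -> F m = 0) -> (m0 \notin s -> F m0 = 0) ->
  \sum_(m <- s) F m = F m0.
Proof.
move=> us H0 H1; case: (boolP (m0 \in s)) => hm.
  rewrite (bigD1_seq m0) //= big_seq_cond big1 ?addr0 //.
  by move=> m /andP [ms mn]; apply: H0.
rewrite H1 // big_seq big1 // => m ms; apply: H0 => //.
by apply/eqP => e; rewrite -e ms in hm.
Qed.

Lemma xbE n k : (xb n)@_k = (n == k)%:R.
Proof. by rewrite /xb mcoeffU. Qed.

Lemma lsa_coef f (a b : W) k :
  (lsa_mul f a b)@_k = \sum_(m <- msupp a) a@_m * b@_(k - m) * f m (k - m).
Proof.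
rewrite /lsa_mul raddf_sum; apply: eq_bigr => m _.
rewrite raddf_sum (@big_single _ _ _ (k - m)) ?fset_uniq //.
- by rewrite /= mcoeffZ xbE (_ : m + (k - m) = k) ?eqxx ?mulr1 //; ring.
- move=> n _ hn; rewrite /= mcoeffZ xbE.
  have -> : (m + n == k) = false by apply/negbTE; apply: contra hn => /eqP <-; apply/eqP; ring.
  by rewrite mulr0.
- by move=> hn; rewrite /= mcoeffZ (mcoeff_outdom hn) mulr0 !mul0r.
Qed.

Lemma lsa_mul_xb f m n : lsa_mul f (xb m) (xb n) = f m n *: xb (m + n).
Proof.
apply/malgP => k; rewrite lsa_coef /xb msuppU oner_eq0 big_seq_fset1 mcoeffZ !mcoeffU.
rewrite eqxx mulr1n.
case: (eqVneq (m + n) k) => [<-|hk]; first by rewrite (_ : m + n - m = n) ?eqxx ?mul1r ?mulr1 //; ring.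
have -> : (n == k - m) = false by apply/negbTE; apply: contra hk => /eqP ->; apply/eqP; ring.
by rewrite /= !mulr0 !mul0r.
Qed.

Lemma seq_max (s : seq int) x : x \in s -> exists2 p, p \in s & forall k, k \in s -> k <= p.
Proof.
elim: s x => // a s IH x; rewrite inE => /orP [/eqP _|hx].
  case: s IH => [|b s] IH.
    by exists a; rewrite ?inE ?eqxx // => k; rewrite inE => /eqP ->.
  have [p hp hk] := IH b (mem_head _ _).
  exists (Num.max a p); first by rewrite /Num.max; case: ifP => _; rewrite inE ?eqxx ?hp ?orbT.
  move=> k; rewrite inE => /orP [/eqP ->|/hk]; first by rewrite le_max lexx.
  by move=> h; rewrite le_max h orbT.
have [p hp hk] := IH x hx.
exists (Num.max a p); first by rewrite /Num.max; case: ifP => _; rewrite inE ?eqxx ?hp ?orbT.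
move=> k; rewrite inE => /orP [/eqP ->|/hk]; first by rewrite le_max lexx.
by move=> h; rewrite le_max h orbT.
Qed.

Lemma seq_min (s : seq int) x : x \in s -> exists2 p, p \in s & forall k, k \in s -> p <= k.
Proof.
move=> hx; have [p hp hk] := @seq_max _ _ (map_f (fun z => - z) hx).
move/mapP: hp => [q hq hpq]; exists q => // k hks; subst p.
by rewrite -lerN2 hk // map_f.
Qed.

Lemma supp_ex (v : W) : v != 0 -> exists k, k \in msupp v.
Proof.
move=> v0; apply/fset0Pn; apply: contra v0 => /eqP h; apply/eqP/malgP => k.
by rewrite mcoeff0; apply: mcoeff_outdom; rewrite h.
Qed.

Lemma top_ex (v : W) : v != 0 -> exists P, v@_P != 0 /\ forall k, P < k -> v@_k = 0.
Proof.
move/supp_ex => [x hx]; have [p hp hk] := @seq_max _ _ hx.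
exists p; split; first by rewrite mcoeff_neq0.
move=> k hpk; apply/eqP; rewrite mcoeff_eq0; apply/negP => /hk; lia.
Qed.

Lemma bot_ex (v : W) : v != 0 -> exists P, v@_P != 0 /\ forall k, k < P -> v@_k = 0.
Proof.
move/supp_ex => [x hx]; have [p hp hk] := @seq_min _ _ hx.
exists p; split; first by rewrite mcoeff_neq0.
move=> k hpk; apply/eqP; rewrite mcoeff_eq0; apply/negP => /hk; lia.
Qed.

Lemma eig_top (y v : W) (l : C) K : y@_K != 0 -> (forall k, K < k -> y@_k = 0) ->
  0 < K -> v != 0 -> witt_bracket y v = l *: v -> forall k, K < k -> v@_k = 0.
Proof.
move=> hK hyk K0 v0 Hb.
have [P [hP hPk]] := @top_ex _ v0.
suff PK : P = K by rewrite -PK.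
have := congr1 (mcoeff (K + P)) Hb.
rewrite mcoeffZ (hPk (K + P)) ?mulr0; last lia.
rewrite /witt_bracket lsa_coef (@big_single _ _ _ K) ?fset_uniq //.
- rewrite (_ : K + P - K = P); last ring.
  move/eqP; rewrite !mulf_eq0 (negbTE hK) (negbTE hP) /= intr_eq0 => /eqP; lia.
- move=> m hm hmK; have hmK' : m < K.
    have : m <= K by apply/negP => h; move: hm; rewrite -mcoeff_neq0 hyk ?eqxx //; lia.
    by rewrite le_eqVlt (negbTE hmK).
  by rewrite (hPk (K + P - m)) ?mulr0 ?mul0r //; lia.
- by rewrite -mcoeff_neq0 hK.
Qed.

Lemma eig_bot (y v : W) (l : C) K : y@_K != 0 -> (forall k, k < K -> y@_k = 0) ->
  K < 0 -> v != 0 -> witt_bracket y v = l *: v -> forall k, k < K -> v@_k = 0.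
Proof.
move=> hK hyk K0 v0 Hb.
have [P [hP hPk]] := @bot_ex _ v0.
suff PK : P = K by rewrite -PK.
have := congr1 (mcoeff (K + P)) Hb.
rewrite mcoeffZ (hPk (K + P)) ?mulr0; last lia.
rewrite /witt_bracket lsa_coef (@big_single _ _ _ K) ?fset_uniq //.
- rewrite (_ : K + P - K = P); last ring.
  move/eqP; rewrite !mulf_eq0 (negbTE hK) (negbTE hP) /= intr_eq0 => /eqP; lia.
- move=> m hm hmK; have hmK' : K < m.
    have : K <= m by apply/negP => h; move: hm; rewrite -mcoeff_neq0 hyk ?eqxx //; lia.
    by rewrite le_eqVlt eq_sym (negbTE hmK).
  by rewrite (hPk (K + P - m)) ?mulr0 ?mul0r //; lia.
- by rewrite -mcoeff_neq0 hK.
Qed.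

Section Lin.
Variable phi : W -> W.
Hypothesis hl : forall (c : C) (a b : W), phi (c *: a + b) = c *: phi a + phi b.

Lemma phi0 : phi 0 = 0.
Proof.
have := hl 1 0 0; rewrite !scale1r !addr0.
by move=> /(congr1 (fun x => x - phi 0)); rewrite addrK subrr => /esym.
Qed.

Lemma phiD a b : phi (a + b) = phi a + phi b.
Proof. by have := hl 1 a b; rewrite !scale1r. Qed.

Lemma phiZ c a : phi (c *: a) = c *: phi a.
Proof. by have := hl c a 0; rewrite !addr0 phi0 addr0. Qed.

Lemma phiB a b : phi (a - b) = phi a - phi b.
Proof. by have := hl (-1) b a; rewrite !scaleN1r addrC => ->; rewrite addrC. Qed.

Lemma phi_sum (s : seq int) (F : int -> W) : phi (\sum_(i <- s) F i) = \sum_(i <- s) phi (F i).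
Proof. exact: (big_morph phi phiD phi0). Qed.

Lemma mkU_xb (c : C) n : << c *g n >> = c *: xb n.
Proof. by apply/malgP => k; rewrite mcoeffZ xbE mcoeffU mulr_natr. Qed.

Lemma no_escape (P : int -> Prop) N : bijective phi ->
  (forall n k, (phi (xb n))@_k != 0 -> P k) -> ~ P N -> False.
Proof.
move=> [g gK Kg] hP hN.
have := congr1 (mcoeff N) (Kg (xb N)).
set a := g (xb N); rewrite xbE eqxx (monalgE a) phi_sum raddf_sum big1.
  by move/eqP; rewrite eq_sym oner_eq0.
move=> n _; rewrite /= mkU_xb phiZ mcoeffZ.
case: (eqVneq (phi (xb n))@_N 0) => [->|h]; first by rewrite mulr0.
by case: hN; apply: hP h.
Qed.
End Lin.

Lemma mult_ext (b : int -> C) : (forall n, b n != 0) ->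
  (forall m n, m != n -> b (m + n) = b m * b n) -> forall m n, b (m + n) = b m * b n.
Proof.
move=> nz H m n; case: (eqVneq m n) => [<-|]; last exact: H.
have HH : forall p q r, p != q -> p + q = r -> b r = b p * b q by move=> p q r pq <-; exact: H.
have b0 : b 0 = 1.
  have h := HH 0 1 1 isT (add0r 1).
  by apply: (mulIf (nz 1)); rewrite mul1r -h.
case: (eqVneq m 0) => [->|m0]; first by rewrite addr0 b0 mulr1.
have h1 : b (4 * m) = b (3 * m) * b m by apply: HH; lia.
have h2 : b (3 * m) = b (2 * m) * b m by apply: HH; lia.
have h3 : b (4 * m) = b (5 * m) * b (- m) by apply: HH; lia.
have h4 : b (5 * m) = b (2 * m) * b (3 * m) by apply: HH; lia.
have h5 : b 0 = b m * b (- m) by apply: HH; lia.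
have e : b (2 * m) * (b m * b m) = b (2 * m) * b (2 * m).
  by rewrite mulrA -h2 -h1 h3 h4 h2 -[RHS]mulr1 -b0 h5; ring.
rewrite (_ : m + m = 2 * m); last ring.
exact/esym/(mulfI (nz _) e).
Qed.

Lemma final_alg (f1 f2 : int -> int -> C) (a : int -> C) (e : int) : e * e = 1 ->
  (forall n, a n != 0) ->
  (forall m n, (n - m)%:~R * a (m + n) = a m * a n * (n * e - m * e)%:~R) ->
  (forall m n, f1 m n * a (m + n) = a m * a n * f2 (m * e) (n * e)) ->
  forall m n, f1 m n = e%:~R * f2 (m * e) (n * e).
Proof.
move=> ee nz E1 E2.
have eeC : (e%:~R : C) * e%:~R = 1 by rewrite -intrM ee.
have eC0 : (e%:~R : C) != 0 by apply/eqP => h; move: eeC; rewrite h mul0r => /eqP; rewrite eq_sym oner_eq0.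
set b := fun n => e%:~R * a n.
have bm : forall m n, b (m + n) = b m * b n.
  apply: mult_ext => [n|m n mn]; first by rewrite /b mulf_neq0.
  have := E1 m n; rewrite (_ : n * e - m * e = (n - m) * e); last ring.
  rewrite intrM => h.
  have nm0 : ((n - m)%:~R : C) != 0 by rewrite intr_eq0 subr_eq0 eq_sym.
  have h' : a (m + n) = a m * a n * e%:~R.
    by apply: (mulfI nm0); rewrite h; ring.
  by rewrite /b h' /=; ring.
move=> m n.
have h := bm m n; rewrite /b in h.
have h2 : a m * a n = e%:~R * a (m + n).
  rewrite h; transitivity ((e%:~R * e%:~R) * (a m * a n)); first by rewrite eeC mul1r.
  ring.
apply: (mulIf (nz (m + n))); rewrite E2 h2; ring.
Qed.

Lemma lsa_single f (u w : W) p q : (forall k, k != p -> u@_k = 0) ->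
  (forall k, k != q -> w@_k = 0) -> (lsa_mul f u w)@_(p + q) = u@_p * w@_q * f p q.
Proof.
move=> hu hw; rewrite lsa_coef (@big_single _ _ _ p) ?fset_uniq //.
- by rewrite (_ : p + q - p = q) //; ring.
- by move=> m _ hm; rewrite hu // !mul0r.
- by move=> hp; rewrite (mcoeff_outdom hp) !mul0r.
Qed.

Theorem proposition3p10 (f1 f2 : int -> int -> C) :
  left_symmetric f1 -> commutator_is_witt f1 ->
  left_symmetric f2 -> commutator_is_witt f2 ->
  (exists phi : W -> W, lsa_isomorphism f1 f2 phi) ->
  (forall m n : int, f1 m n = f2 m n) \/
  (forall m n : int, f1 m n = - f2 (- m) (- n)).
Proof.
move=> _ c1 _ c2 [phi [hl hbij hm]].
have hbr : forall a b, phi (witt_bracket a b) = witt_bracket (phi a) (phi b).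
  by move=> a b; rewrite -c1 -c2 (@phiB phi hl) !hm.
have inj := bij_inj hbij.
have xb0 : forall n, xb n != 0.
  by move=> n; apply/eqP => /(congr1 (mcoeff n)); rewrite xbE eqxx mcoeff0 => /eqP; rewrite oner_eq0.
have vnz : forall n, phi (xb n) != 0.
  move=> n; apply: contra (xb0 n) => /eqP h; apply/eqP; apply: inj; by rewrite h (@phi0 phi hl).
set y := phi (xb 0).
have eig : forall n, witt_bracket y (phi (xb n)) = n%:~R *: phi (xb n).
  by move=> n; rewrite -hbr /witt_bracket lsa_mul_xb add0r subr0 (@phiZ phi hl).
have ytop : forall k, 0 < k -> y@_k = 0.
  have [K [hK hKk]] := @top_ex _ (vnz 0).
  case: (ltP 0 K) => K0; last by move=> k k0; apply: hKk; lia.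
  exfalso; apply: (@no_escape phi hl (fun k => k <= K) (K + 1) hbij); last lia.
  move=> n k hk; case: (leP k K) => // hkK.
  by move: hk; rewrite (@eig_top _ _ _ _ hK hKk K0 (vnz n) (eig n) _ hkK) eqxx.
have ybot : forall k, k < 0 -> y@_k = 0.
  have [K [hK hKk]] := @bot_ex _ (vnz 0).
  case: (ltP K 0) => K0; last by move=> k k0; apply: hKk; lia.
  exfalso; apply: (@no_escape phi hl (fun k => K <= k) (K - 1) hbij); last lia.
  move=> n k hk; case: (leP K k) => // hkK.
  by move: hk; rewrite (@eig_bot _ _ _ _ hK hKk K0 (vnz n) (eig n) _ hkK) eqxx.
have yk : forall k, k != 0 -> y@_k = 0.
  move=> k k0; case: (ltP 0 k) => h; first exact: ytop.
  by apply: ybot; lia.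
set c := y@_0.
have y0 : c != 0.
  apply: contra (vnz 0) => /eqP h; apply/eqP/malgP => k; rewrite mcoeff0.
  by case: (eqVneq k 0) => [->|]; [exact: h | exact: yk].
have ycoef : forall v k, (witt_bracket y v)@_k = c * v@_k * k%:~R.
  move=> v k; rewrite /witt_bracket lsa_coef (@big_single _ _ _ 0) ?fset_uniq //.
  - by rewrite !subr0.
  - by move=> m _ hm0; rewrite yk // !mul0r.
  - by move=> h; move: y0; rewrite /c mcoeff_neq0 (negbTE h).
have ev : forall n k, (phi (xb n))@_k != 0 -> c * k%:~R = n%:~R.
  move=> n k hk; have := congr1 (mcoeff k) (eig n); rewrite ycoef mcoeffZ.
  move/eqP; rewrite -subr_eq0 (_ : c * (phi (xb n))@_k * k%:~R - n%:~R * (phi (xb n))@_k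
     = (c * k%:~R - n%:~R) * (phi (xb n))@_k); last ring.
  by rewrite mulf_eq0 (negbTE hk) orbF subr_eq0 => /eqP.
have [k1 [hk1 _]] := @top_ex _ (vnz 1).
have c1e := ev 1 k1 hk1.
have supp : forall n k, (phi (xb n))@_k != 0 -> k = n * k1.
  move=> n k hk; have e := ev n k hk.
  have : c * (k - n * k1)%:~R = 0 by rewrite intrB intrM mulrBr e mulrCA c1e mulr1 subrr.
  by move/eqP; rewrite mulf_eq0 (negbTE y0) /= intr_eq0 subr_eq0 => /eqP.
have k1u : k1 = 1 \/ k1 = -1.
  case: (boolP ((k1 == 1) || (k1 == -1))) => [/orP [] /eqP ->|hk]; [by left | by right |].
  exfalso; apply: (@no_escape phi hl (fun k => exists n, k = n * k1) 1 hbij).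
    by move=> n k hk'; exists n; apply: supp.
  move=> [n hn]; move: hk; rewrite negb_or => /andP [h1 h2].
  have : (k1 <= -2) \/ (k1 = 0) \/ (2 <= k1) by lia.
  have : (n <= -1) \/ (n = 0) \/ (1 <= n) by lia.
  case=> [h'|[h'|h']]; case=> [h|[h|h]]; nia.
pose a := fun n => (phi (xb n))@_(n * k1).
have phis : forall n k, k != n * k1 -> (phi (xb n))@_k = 0.
  move=> n k hk; case: (eqVneq (phi (xb n))@_k 0) => // h.
  by rewrite (supp _ _ h) eqxx in hk.
have anz : forall n, a n != 0.
  move=> n; apply: contra (vnz n) => /eqP h; apply/eqP/malgP => k; rewrite mcoeff0.
  by case: (eqVneq k (n * k1)) => [->|hk]; [exact: h | exact: phis].
have E1 : forall m n, (n - m)%:~R * a (m + n) = a m * a n * (n * k1 - m * k1)%:~R.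
  move=> m n; have := congr1 (mcoeff (m * k1 + n * k1)) (hbr (xb m) (xb n)).
  rewrite /witt_bracket lsa_mul_xb (@phiZ phi hl) mcoeffZ lsa_single; last 2 first.
  - exact: phis.
  - exact: phis.
  by rewrite -mulrDl /=.
have E2 : forall m n, f1 m n * a (m + n) = a m * a n * f2 (m * k1) (n * k1).
  move=> m n; have := congr1 (mcoeff (m * k1 + n * k1)) (hm (xb m) (xb n)).
  rewrite lsa_mul_xb (@phiZ phi hl) mcoeffZ lsa_single; last 2 first.
  - exact: phis.
  - exact: phis.
  by rewrite -mulrDl /=.
have kk : k1 * k1 = 1 by case: k1u => ->.
have H := @final_alg f1 f2 a k1 kk anz E1 E2.
case: k1u => e; [left | right] => m n; rewrite H e.
  by rewrite !mulr1 mul1r.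
by rewrite !mulrN1 rmorphN1 mulN1r.
Qed.
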